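(* Let $\Gamma$ be a profinite group, let $Z_0$ be a finite $\Gamma$-set with $|Z_0|=n\geq 1$, and let $\pi\colon Z\to Z_0$ be a $\Gamma$-covering of degree $2$, with canonical involution $\sigma$ of $Z$. Let $\delta\colon C(Z/Z_0)\to\Delta(Z)$ be the canonical map, and let $\iota$ denote the nontrivial automorphism of the two-element set $\Delta(Z)$. Then: (1) for sections $\omega,\omega'\in C(Z/Z_0)$ we have $\delta(\omega)=\delta(\omega')$ if and only if $|\omega\cap\omega'|\equiv n \pmod 2$; (2) for every section $\omega$, writing $\underline{\sigma}(\omega)=Z\setminus\omega$ for its complement, we have $\delta(\underline{\sigma}(\omega))=\delta(\omega)$ if $n$ is even and $\delta(\underline{\sigma}(\omega))=\iota(\delta(\omega))$ if $n$ is odd.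
   Context: A (finite) $\Gamma$-set is a finite set with a continuous left action of $\Gamma$ (discrete topology). A $\Gamma$-covering of degree $2$ is a $\Gamma$-equivariant map $\pi\colon Z\to Z_0$ all of whose fibers have exactly $2$ elements; its canonical involution $\sigma\colon Z\to Z$ interchanges the two elements of each fiber. The set of sections $C(Z/Z_0)$ is the set of subsets $\{z_1,\dots,z_n\}\subset Z$ with $\{\pi(z_1),\dots,\pi(z_n)\}=Z_0$ (not necessarily $\Gamma$-stable); $\Gamma$ acts on it. For a $\Gamma$-set $X$ with $|X|=m\geq 2$, let $\Sigma_m(X)$ be the set of $m$-tuples $(x_1,\dots,x_m)$ with $X=\{x_1,\dots,x_m\}$, with the right action of the symmetric group $\mathfrak S_m$; the discriminant $\Delta(X)=\Sigma_m(X)/\mathfrak A_m$ is the two-element $\Gamma$-set of orbits of the alternating group. The map $\delta\colon C(Z/Z_0)\to\Delta(Z)$ sends a section $\{z_1,\dots,z_n\}$ to the $\mathfrak A_{2n}$-orbit of $(z_1,\dots,z_n,\sigma(z_1),\dots,\sigma(z_n))$. *)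

(* Defs.v *)
From mathcomp Require Import all_boot all_fingroup.
Set Implicit Arguments. Unset Strict Implicit. Unset Printing Implicit Defensive.

Section Discriminant.
Variables (Z Z0 : finType) (pi : Z -> Z0).

Definition cov_sigma (z : Z) : Z :=
  odflt z [pick z' | (pi z' == pi z) && (z' != z)].

Definition is_section (w : {set Z}) : bool :=
  (pi @: w == [set: Z0]) && (#|w| == #|Z0|).

Definition Sigma : {set {ffun 'I_#|Z| -> Z}} :=
  [set f : {ffun 'I_#|Z| -> Z} | injectiveb f].

Definition sigma_act (f : {ffun 'I_#|Z| -> Z}) (p : {perm 'I_#|Z|})
  : {ffun 'I_#|Z| -> Z} := [ffun i => f (p i)].

Definition alt_orbit (f : {ffun 'I_#|Z| -> Z}) : {set {ffun 'I_#|Z| -> Z}} :=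
  [set sigma_act f p | p in [set p : {perm 'I_#|Z|} | ~~ odd_perm p]].

Definition Delta : {set {set {ffun 'I_#|Z| -> Z}}} := alt_orbit @: Sigma.

(* nontrivial automorphism of the two-element set Delta(Z):
   an orbit goes to the other orbit, i.e. its complement in Sigma_m(Z) *)
Definition disc_iota (c : {set {ffun 'I_#|Z| -> Z}}) : {set {ffun 'I_#|Z| -> Z}} :=
  Sigma :\: c.

Definition section_tuple (w : {set Z}) : {ffun 'I_#|Z| -> Z} :=
  [ffun i : 'I_#|Z| => nth (enum_val i) (enum w ++ map cov_sigma (enum w)) i].

Definition delta (w : {set Z}) : {set {ffun 'I_#|Z| -> Z}} :=
  alt_orbit (section_tuple w).

End Discriminant.

(* Main.v *)
Require Import Defs.
From mathcomp Require Import all_boot all_fingroup.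
Set Implicit Arguments. Unset Strict Implicit. Unset Printing Implicit Defensive.

Section Orb.
Variable Z : finType.
Local Open Scope group_scope.
Notation F := {ffun 'I_#|Z| -> Z}.

Lemma sigma_actM (f : F) p q : sigma_act (sigma_act f p) q = sigma_act f (q * p).
Proof. by apply/ffunP => i; rewrite !ffunE permM. Qed.

Lemma sigma_act1 (f : F) : sigma_act f 1 = f.
Proof. by apply/ffunP => i; rewrite !ffunE perm1. Qed.

Lemma alt_orbit_even (f : F) p : ~~ odd_perm p ->
  alt_orbit (sigma_act f p) = alt_orbit f.
Proof.
move=> hp; apply/setP => x; apply/imsetP/imsetP => [[q]|[q]].
  rewrite inE => hq ->; exists (q * p); last by rewrite sigma_actM.
  by rewrite inE odd_permM (negPf hq) (negPf hp).
rewrite inE => hq ->; exists (q * p^-1).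
  by rewrite inE odd_permM odd_permV (negPf hq) (negPf hp).
by rewrite sigma_actM -mulgA mulVg mulg1.
Qed.

Lemma mem_alt_orbit (f : F) : f \in alt_orbit f.
Proof.
by apply/imsetP; exists 1; rewrite ?sigma_act1 // inE odd_perm1.
Qed.

Lemma alt_orbit_odd (f : F) p : injective f -> odd_perm p ->
  alt_orbit (sigma_act f p) = Sigma Z :\: alt_orbit f.
Proof.
move=> injf hp.
have key : forall r r', sigma_act f r = sigma_act f r' -> r = r'.
  move=> r r' e; apply/permP => i.
  by apply: injf; move/ffunP: e => /(_ i); rewrite !ffunE.
apply/setP => x; apply/imsetP/idP => [[q]|].
  rewrite inE => hq ->; rewrite sigma_actM !inE; apply/andP; split.
    apply/negP => /imsetP [r]; rewrite inE => hr /key e.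
    by move: hr; rewrite -e odd_permM hp (negPf hq).
  apply/injectiveP => i j; rewrite !ffunE => /injf; exact: perm_inj.
rewrite !inE => /andP [hn /injectiveP injx].
have [g fg gf] : bijective f by apply: inj_card_bij => //; rewrite card_ord.
have injr : injective (fun i => g (x i)).
  by move=> i j /(can_inj gf) /injx.
pose r := perm injr.
have ex : x = sigma_act f r by apply/ffunP => i; rewrite ffunE permE gf.
have hr : odd_perm r.
  apply: contraR hn => hr; apply/imsetP; exists r => //; by rewrite inE.
exists (r * p^-1).
  by rewrite inE odd_permM odd_permV hr hp.
by rewrite sigma_actM -mulgA mulVg mulg1.
Qed.
End Orb.

Section Idx.
Variables (Z : finType) (sg : Z -> Z) (n : nat) (z0 : Z).
Local Open Scope group_scope.

Definition Ft (u : seq Z) (i : 'I_(n + n)) : Z := nth z0 (u ++ map sg u) i.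

Lemma Ft_l u (j : 'I_n) : size u = n -> Ft u (lshift n j) = nth z0 u j.
Proof. by move=> hu; rewrite /Ft /= nth_cat hu ltn_ord. Qed.

Lemma Ft_r u (j : 'I_n) : size u = n -> Ft u (rshift n j) = sg (nth z0 u j).
Proof.
move=> hu; rewrite /Ft /= nth_cat hu ltnNge leq_addr /= addKn.
by rewrite (nth_map z0) // hu.
Qed.

Lemma lr_neq (x y : 'I_n) : lshift n x != rshift n y.
Proof.
apply/eqP => /(congr1 val) /= e; have := ltn_ord x; rewrite e.
by rewrite ltnNge leq_addr.
Qed.

Definition Tfun (t : {perm 'I_n}) (i : 'I_(n + n)) : 'I_(n + n) :=
  unsplit (match split i with inl j => inl _ (t j) | inr j => inr _ (t j) end).

Lemma Tfun_l t j : Tfun t (lshift n j) = lshift n (t j).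
Proof. by rewrite /Tfun (unsplitK (inl _ j)). Qed.
Lemma Tfun_r t j : Tfun t (rshift n j) = rshift n (t j).
Proof. by rewrite /Tfun (unsplitK (inr _ j)). Qed.

Lemma Tfun_inj t : injective (Tfun t).
Proof.
move=> i i'; case: (split_ordP i) => j ->; case: (split_ordP i') => j' ->;
 rewrite ?Tfun_l ?Tfun_r.
- by move/lshift_inj/perm_inj ->.
- by move=> e; move: (lr_neq (t j) (t j')); rewrite e eqxx.
- by move=> e; move: (lr_neq (t j') (t j)); rewrite e eqxx.
- by move/rshift_inj/perm_inj ->.
Qed.

Definition Tdouble t : {perm 'I_(n + n)} := perm (@Tfun_inj t).

Lemma TdoubleE t i : Tdouble t i = Tfun t i.
Proof. by rewrite permE. Qed.

Lemma TdoubleM t1 t2 : Tdouble (t1 * t2) = Tdouble t1 * Tdouble t2.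
Proof.
apply/permP => i; rewrite permM !TdoubleE.
by case: (split_ordP i) => j ->; rewrite ?Tfun_l ?Tfun_r permM.
Qed.

Lemma Tdouble1 : Tdouble 1 = 1.
Proof.
apply/permP => i; rewrite TdoubleE perm1.
by case: (split_ordP i) => j ->; rewrite ?Tfun_l ?Tfun_r perm1.
Qed.

Lemma Tdouble_tperm x y :
  Tdouble (tperm x y) = tperm (lshift n x) (lshift n y) * tperm (rshift n x) (rshift n y).
Proof.
apply/permP => i; rewrite permM TdoubleE.
case: (split_ordP i) => j ->; rewrite ?Tfun_l ?Tfun_r.
- rewrite -(inj_tperm _ _ _ (@lshift_inj n n)) [RHS]tpermD //.
  + by rewrite eq_sym lr_neq.
  + by rewrite eq_sym lr_neq.
- rewrite (tpermD (lr_neq _ _) (lr_neq _ _)).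
  by rewrite (inj_tperm _ _ _ (@rshift_inj n n)).
Qed.

Lemma odd_Tdouble t : odd_perm (Tdouble t) = false.
Proof.
have [ts -> _] := prod_tpermP t.
elim: ts => [|a ts IH]; first by rewrite big_nil Tdouble1 odd_perm1.
rewrite big_cons TdoubleM Tdouble_tperm !odd_permM IH !odd_tperm.
rewrite (inj_eq (@lshift_inj n n)) (inj_eq (@rshift_inj n n)).
by case: (_ != _).
Qed.

Lemma stepA u v (t : {perm 'I_n}) : size u = n -> size v = n ->
  (forall j : 'I_n, nth z0 v j = nth z0 u (t j)) ->
  forall i, Ft v i = Ft u (Tdouble t i).
Proof.
move=> hu hv h i; rewrite TdoubleE.
by case: (split_ordP i) => j ->; rewrite ?Tfun_l ?Tfun_r ?Ft_l ?Ft_r // h.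
Qed.


Lemma stepB u v : involutive sg -> size u = n -> size v = n ->
  (forall j, j < n -> nth z0 v j = nth z0 u j \/ nth z0 v j = sg (nth z0 u j)) ->
  exists q : {perm 'I_(n + n)}, (forall i, Ft v i = Ft u (q i)) /\
    odd_perm q = odd (count (fun j => nth z0 v j != nth z0 u j) (iota 0 n)).
Proof.
move=> sgK hu hv hvu.
pose wk k := mkseq (fun j => if j < k then nth z0 v j else nth z0 u j) n.
have szw k : size (wk k) = n by rewrite size_mkseq.
have nw k j : j < n -> nth z0 (wk k) j = if j < k then nth z0 v j else nth z0 u j.
  by move=> hj; rewrite nth_mkseq.
suff: forall k, k <= n -> exists q : {perm 'I_(n + n)}, (forall i, Ft (wk k) i = Ft u (q i)) /\
    odd_perm q = odd (count (fun j => nth z0 v j != nth z0 u j) (iota 0 k)).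
  have -> : v = wk n.
    apply: (@eq_from_nth _ z0); rewrite ?szw // hv => j hj.
    by rewrite nw // hj.
  by apply.
elim => [_|k IH hk].
  exists 1; split; last by rewrite odd_perm1.
  move=> i; rewrite perm1; congr Ft; apply: (@eq_from_nth _ z0); rewrite ?szw // => j hj.
  by rewrite nw.
have [q [hq oq]] := IH (ltnW hk).
rewrite -addn1 iotaD count_cat /= add0n addn0.
have [e|ne] := eqVneq (nth z0 v k) (nth z0 u k).
  exists q; split; last by rewrite oq addn0.
  move=> i; rewrite -hq; congr Ft; apply: (@eq_from_nth _ z0); rewrite ?szw // => j hj.
  rewrite !nw // addn1 ltnS leq_eqVlt.
  by case: eqVneq => [->|]; rewrite ?ltnn ?e //.
have vk : nth z0 v k = sg (nth z0 u k) by case: (hvu k hk) => // e; rewrite e eqxx in ne.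
pose K : 'I_n := Ordinal hk.
exists (tperm (lshift n K) (rshift n K) * q); split; last first.
  by rewrite odd_mul_tperm lr_neq oq oddD addbC.
move=> i; rewrite permM -hq.
case: (split_ordP i) => j ->.
  have [ejK|njK] := eqVneq j K.
    rewrite ejK tpermL Ft_l ?szw // Ft_r ?szw // !nw //= ?addn1 ?ltnSn ?ltnn //.
  rewrite tpermD; first last.
  - by rewrite eq_sym lr_neq.
  - by rewrite (inj_eq (@lshift_inj n n)) eq_sym.
  rewrite !Ft_l ?szw // !nw // addn1 ltnS leq_eqVlt.
  by have -> : (j == k :> nat) = false by apply: contraNF njK => e; apply/eqP; apply: val_inj; apply/eqP.
have [ejK|njK] := eqVneq j K.
  rewrite ejK tpermR Ft_l ?szw // Ft_r ?szw // !nw //= ?addn1 ?ltnSn ?ltnn // vk sgK //.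
rewrite tpermD; first last.
- by rewrite (inj_eq (@rshift_inj n n)) eq_sym.
- by rewrite lr_neq.
rewrite !Ft_r ?szw // !nw // addn1 ltnS leq_eqVlt.
by have -> : (j == k :> nat) = false by apply: contraNF njK => e; apply/eqP; apply: val_inj; apply/eqP.
Qed.

End Idx.

Lemma cnt (T : finType) (A B : {set T}) : count (fun b => b \notin B) (enum A) = #|A :\: B|.
Proof.
rewrite -size_filter cardE /enum_mem -!filter_predI /=.
congr size; apply: eq_filter => x; rewrite !inE /=. by rewrite andbC.
Qed.

Lemma odd_cast_perm m n (e : m = n) (s : 'S_m) : odd_perm (cast_perm e s) = odd_perm s.
Proof. by case: n / e; rewrite cast_perm_id. Qed.

Section Main.
Variables (Z Z0 : finType) (pi : Z -> Z0).
Hypothesis Hcov : forall z0 : Z0, #|[set z | pi z == z0]| = 2.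
Local Notation sg := (cov_sigma pi).
Local Notation n := #|Z0|.

Lemma sg_spec z : pi (sg z) = pi z /\ sg z != z.
Proof.
rewrite /cov_sigma; case: pickP => [z' /andP [/eqP h1 h2] | h] //=.
have : [set y | pi y == pi z] \subset [set z].
  apply/subsetP => y; rewrite !inE => hy; move: (h y); rewrite /= hy /=.
  by move/negbFE.
by move/subset_leq_card; rewrite Hcov cards1.
Qed.

Lemma sg_pi z : pi (sg z) = pi z. Proof. by case: (sg_spec z). Qed.
Lemma sg_neq z : sg z != z. Proof. by case: (sg_spec z). Qed.

Lemma fiber2 y z : pi y = pi z -> y != z -> y = sg z.
Proof.
move=> hp hn; apply/eqP; apply/negPn/negP => hs.
have : sg z |: (y |: [set z]) \subset [set x | pi x == pi z].
  by apply/subsetP => x; rewrite !inE => /or3P [] /eqP ->; rewrite ?hp ?sg_pi.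
move/subset_leq_card; rewrite Hcov !cardsU1 cards1 !inE.
have h1 : (sg z == y) = false by rewrite eq_sym (negPf hs).
have h2 : (sg z == z) = false by rewrite (negPf (sg_neq z)).
by rewrite (negPf hn) h1 h2.
Qed.

Lemma sgK : involutive sg.
Proof.
move=> z; apply/eqP; apply/negPn/negP => h.
have e := fiber2 (etrans (sg_pi _) (sg_pi _)) h.
by move: (sg_neq (sg z)); rewrite e eqxx.
Qed.

Section Sec.
Variable w : {set Z}.
Hypothesis hw : is_section pi w.

Lemma sec_img : pi @: w = [set: Z0]. Proof. by case/andP: hw => /eqP. Qed.
Lemma sec_card : #|w| = n. Proof. by case/andP: hw => _ /eqP. Qed.

Lemma sec_inj : {in w &, injective pi}.
Proof. by apply/imset_injP; rewrite sec_img cardsT sec_card. Qed.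

Lemma sg_out a : a \in w -> sg a \notin w.
Proof.
move=> ha; apply/negP => hs.
by move: (sg_neq a); rewrite (sec_inj hs ha (sg_pi a)) eqxx.
Qed.

Lemma sg_in b : b \notin w -> sg b \in w.
Proof.
move=> hb; have : pi b \in pi @: w by rewrite sec_img inE.
case/imsetP => a ha e.
have nab : a != b by apply: contraNneq hb => <-.
by rewrite -(fiber2 (esym e) nab).
Qed.

Lemma card_compl : #|~: w| = n.
Proof.
apply/eqP; rewrite eqn_leq; apply/andP; split.
  rewrite -sec_card -(card_imset (~: w) (can_inj sgK)).
  by apply/subset_leq_card/subsetP => x /imsetP [b]; rewrite inE => /sg_in ? ->.
rewrite -sec_card -(card_imset w (can_inj sgK)).
by apply/subset_leq_card/subsetP => x /imsetP [b] /sg_out ? ->; rewrite inE.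
Qed.

Lemma cardZ : #|Z| = n + n.
Proof. by rewrite -(cardsC w) sec_card card_compl. Qed.

Lemma tuple_Ft (v : {set Z}) (hv : #|v| = n) (z0 : Z) (i : 'I_#|Z|) :
  section_tuple pi v i = Ft sg z0 (enum v) (cast_ord cardZ i).
Proof.
rewrite ffunE /Ft /=; apply: set_nth_default.
by rewrite size_cat size_map -cardE hv -cardZ.
Qed.

Lemma main_rel (z0 : Z) (w' : {set Z}) : #|w'| = n ->
  {in w' &, injective (fun b => if b \in w then b else sg b)} ->
  exists p, section_tuple pi w' = sigma_act (section_tuple pi w) p /\
            odd_perm p = odd #|w' :\: w|.
Proof.
move=> hw' hinj.
set fx := fun b => if b \in w then b else sg b.
set s := enum w; set s' := enum w'; set s'' := map fx s'.
have hs : size s = n by rewrite -cardE sec_card.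
have hs' : size s' = n by rewrite -cardE hw'.
have hs'' : size s'' = n by rewrite size_map.
have us'' : uniq s''.
  rewrite map_inj_in_uniq ?enum_uniq // => x y; rewrite !mem_enum; exact: hinj.
have sub : {subset s'' <= s}.
  move=> x /mapP [b _ ->]; rewrite mem_enum /fx; case: ifP => // /negbT; exact: sg_in.
have [_ eqm] := uniq_min_size us'' sub (eq_leq (etrans hs (esym hs''))).
have pe : perm_eq s'' s := uniq_perm us'' (enum_uniq _) eqm.
have hst : size s == n by rewrite hs.
have /tuple_permP [tau etau] : perm_eq s'' (Tuple hst) by [].
have hA : forall j : 'I_n, nth z0 s'' j = nth z0 s (tau j).
  move=> j; rewrite etau -[nth z0 _ j](tnth_nth z0) tnth_mktuple (tnth_nth z0) //.
have hB := stepA sg hs hs'' hA.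
have hvu : forall j, j < n -> nth z0 s' j = nth z0 s'' j \/ nth z0 s' j = sg (nth z0 s'' j).
  move=> j hj; rewrite (nth_map z0) ?hs' // /fx; case: ifP => _; [left|right] => //.
  by rewrite sgK.
have [q [hq oq]] := stepB sgK hs'' hs' hvu.
have hc : count (fun j => nth z0 s' j != nth z0 s'' j) (iota 0 n) = #|w' :\: w|.
  rewrite -cnt -/s'.
  have {2}-> : s' = map (nth z0 s') (iota 0 n) by rewrite -hs' -/(mkseq _ _) mkseq_nth.
  rewrite count_map; apply: eq_in_count => j; rewrite mem_iota => /andP [_ hj].
  rewrite /= (nth_map z0) ?hs' // /fx; case: ifP => hb; first by rewrite eqxx.
  by rewrite eq_sym sg_neq.
exists (cast_perm (esym cardZ) (q * Tdouble tau)); split; last first.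
  by rewrite odd_cast_perm odd_permM oq hc odd_Tdouble addbF.
apply/ffunP => i; rewrite [RHS]ffunE (tuple_Ft hw' z0) (tuple_Ft sec_card z0) cast_permE.
rewrite cast_ordKV permM -hB -hq; congr Ft; exact: val_inj.
Qed.

Lemma tuple_inj (z0 : Z) : injective (section_tuple pi w).
Proof.
move=> i i'; rewrite !(tuple_Ft sec_card z0).
have hs : size (enum w) = n by rewrite -cardE sec_card.
have us := enum_uniq (mem w).
move: (cast_ord cardZ i) (cast_ord cardZ i') (@cast_ord_inj _ _ cardZ i i') => a b hab e.
apply: hab; move: e.
case: (split_ordP a) => j ->; case: (split_ordP b) => j' ->;
  rewrite ?Ft_l ?Ft_r //.
- by move/eqP; rewrite nth_uniq ?hs // => /eqP /val_inj ->.
- move=> e; have : nth z0 (enum w) j \in w by rewrite -mem_enum mem_nth ?hs.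
  by rewrite e (negPf (sg_out _)) // -mem_enum mem_nth ?hs.
- move=> e; have : nth z0 (enum w) j' \in w by rewrite -mem_enum mem_nth ?hs.
  by rewrite -e (negPf (sg_out _)) // -mem_enum mem_nth ?hs.
- by move/(can_inj sgK)/eqP; rewrite nth_uniq ?hs // => /eqP /val_inj ->.
Qed.
End Sec.
End Main.
Unset Implicit Arguments.

Theorem proposition2p1 (Z Z0 : finType) (pi : Z -> Z0)
  (Hcov : forall z0 : Z0, #|[set z | pi z == z0]| = 2)
  (Hn : 0 < #|Z0|) :
  (forall w w' : {set Z}, is_section pi w -> is_section pi w' ->
     (delta pi w = delta pi w' <-> #|w :&: w'| = #|Z0| %[mod 2]))
  /\
  (forall w : {set Z}, is_section pi w ->
     delta pi (~: w) =
       (if ~~ odd #|Z0| then delta pi w else disc_iota (delta pi w))).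
Proof.
split.
- move=> w w' hw hw'.
  have [z0 _] : exists z, z \in w by apply/card_gt0P; rewrite (sec_card hw).
  have hinj : {in w' &, injective (fun b => if b \in w then b else cov_sigma pi b)}.
    move=> x y hx hy e; apply: (sec_inj hw' hx hy).
    have hp : forall b, pi (if b \in w then b else cov_sigma pi b) = pi b.
      by move=> b; case: ifP => _ //; rewrite (sg_pi Hcov).
    by rewrite -(hp x) -(hp y) e.
  have [p [ep op]] := main_rel Hcov hw z0 (sec_card hw') hinj.
  have hk : #|w' :&: w| + #|w' :\: w| = #|Z0| by rewrite cardsID (sec_card hw').
  rewrite /delta ep setIC -hk !modn2 oddD.
  case: (boolP (odd_perm p)) => hp.
    rewrite (@alt_orbit_odd _ _ p (tuple_inj Hcov hw z0) hp).
    rewrite -op hp addbT; split => [e|]; last by case: (odd _).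
    have := mem_alt_orbit (section_tuple pi w); rewrite {1}e inE.
    by rewrite mem_alt_orbit.
  rewrite alt_orbit_even // -op (negPf hp) addbF; by split.
- move=> w hw.
  have [z0 _] : exists z, z \in w by apply/card_gt0P; rewrite (sec_card hw).
  have hinj : {in ~: w &, injective (fun b => if b \in w then b else cov_sigma pi b)}.
    move=> x y; rewrite !inE => hx hy; rewrite (negPf hx) (negPf hy).
    exact: (can_inj (sgK Hcov)).
  have [p [ep op]] := main_rel Hcov hw z0 (card_compl Hcov hw) hinj.
  have hd : ~: w :\: w = ~: w by apply/setP => x; rewrite !inE; case: (x \in w).
  rewrite hd (card_compl Hcov hw) in op.
  rewrite /delta ep -op.
  case: (boolP (odd_perm p)) => hp /=.
    by rewrite (@alt_orbit_odd _ _ p (tuple_inj Hcov hw z0) hp).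
  by rewrite alt_orbit_even.
Qed.
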